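(* Let $1<w\le 2$, $h>1$, $k\ge 2$, and let $\frac12\le y_1<\dots<y_n\le h-\frac12$ be uniformly spaced with $y_{i+1}-y_i=\frac1k$ for all $i$. Let $(\mathbf x,\prec)$ be a $\frac1k$-reasonable layout of this instance and let $a\in\mathbb R$. Then there are at most $2(\log_2 k+1)$ standard bad squares $s_i$ with $y_i\in[a,a+1]$.
   Context: The instance is the strip $T=[0,w]\times[0,h]$ with the given $y_i$. A layout is a pair $(\mathbf x,\prec)$ where $\mathbf x=(x_1,\dots,x_n)$ with $x_i\in[\frac12,w-\frac12]$, and $\prec$ is a total order on the squares $s_1,\dots,s_n$, where $s_i$ is the closed axis-parallel unit square with centre $(x_i,y_i)$. If $s_i\prec s_j$ we say $s_j$ is in front of $s_i$ and $s_i$ is behind $s_j$. A point $p$ on the boundary of $s_i$ is visible if every square $s_j$ ($j\neq i$) containing $p$ is behind $s_i$, and covered otherwise. The visible perimeter of $s_i$ is the total length of its visible boundary points; the gap of $s_i$ is its visible perimeter minus $2$, the gap of a layout is the minimum gap of its squares, and a layout is $\varepsilon$-reasonable if its gap is larger than $\varepsilon$. A bad square is a square with at least two of its four corners covered; a standard bad square is a bad square one of whose vertical sides is entirely covered. *)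

(* Defs.v *)
From mathcomp Require Import all_boot all_order all_algebra.
From mathcomp Require Import all_classical all_reals all_analysis.
Set Implicit Arguments. Unset Strict Implicit. Unset Printing Implicit Defensive.
Import Order.TTheory GRing.Theory Num.Theory.
Local Open Scope classical_set_scope.
Local Open Scope ring_scope.

Section Layout.
Variables (R : realType) (n : nat) (x y : 'I_n -> R) (prec : rel 'I_n).
(* prec j i means s_j ≺ s_i, i.e. s_j is behind s_i. *)

Definition in_square (j : 'I_n) (p : R * R) : Prop :=
  `|p.1 - x j| <= 2^-1 /\ `|p.2 - y j| <= 2^-1.

Definition on_boundary (i : 'I_n) (p : R * R) : Prop :=
  Num.max `|p.1 - x i| `|p.2 - y i| = 2^-1.

Definition visible (i : 'I_n) (p : R * R) : Prop :=
  on_boundary i p /\ forall j, j != i -> in_square j p -> prec j i.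

Definition covered (i : 'I_n) (p : R * R) : Prop :=
  on_boundary i p /\ ~ visible i p.

Definition bottom_side (i : 'I_n) (t : R) : R * R := (x i - 2^-1 + t, y i - 2^-1).
Definition right_side (i : 'I_n) (t : R) : R * R := (x i + 2^-1, y i - 2^-1 + t).
Definition top_side (i : 'I_n) (t : R) : R * R := (x i + 2^-1 - t, y i + 2^-1).
Definition left_side (i : 'I_n) (t : R) : R * R := (x i - 2^-1, y i + 2^-1 - t).

Definition visible_on_side (i : 'I_n) (side : R -> R * R) : set R :=
  [set t : R | 0 <= t <= 1 /\ visible i (side t)].

Definition visible_perimeter (i : 'I_n) : \bar R :=
  (lebesgue_measure (visible_on_side i (bottom_side i))
   + lebesgue_measure (visible_on_side i (right_side i))
   + lebesgue_measure (visible_on_side i (top_side i))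
   + lebesgue_measure (visible_on_side i (left_side i)))%E.

Definition gap (i : 'I_n) : \bar R := (visible_perimeter i - 2%:E)%E.

(* The gap of the layout (minimum of the gaps) is larger than eps. *)
Definition reasonable (eps : R) : Prop := forall i, (eps%:E < gap i)%E.

Definition corner (i : 'I_n) (c : bool * bool) : R * R :=
  (x i + (if c.1 then 2^-1 else - 2^-1), y i + (if c.2 then 2^-1 else - 2^-1)).

Definition bad_square (i : 'I_n) : Prop :=
  exists c1 c2 : bool * bool, c1 <> c2 /\ covered i (corner i c1) /\ covered i (corner i c2).

Definition standard_bad_square (i : 'I_n) : Prop :=
  bad_square i /\
  ((forall t, 0 <= t <= 1 -> covered i (left_side i t)) \/
   (forall t, 0 <= t <= 1 -> covered i (right_side i t))).

End Layout.

Definition strict_total_order (n : nat) (prec : rel 'I_n) : Prop :=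
  (forall i, ~~ prec i i) /\
  (forall i j l, prec i j -> prec j l -> prec i l) /\
  (forall i j, i != j -> prec i j || prec j i).

(* Main.v *)
Require Import Defs.
From mathcomp Require Import all_boot all_order all_algebra.
From mathcomp Require Import all_classical all_reals all_analysis.
From mathcomp Require Import lra.
Import Order.TTheory GRing.Theory Num.Theory.
Local Open Scope classical_set_scope.
Local Open Scope ring_scope.

Lemma exmax (R : realType) n (S : {set 'I_n}) (q : 'I_n -> R) i0 :
  i0 \in S -> exists2 i, i \in S & forall j, j \in S -> q j <= q i.
Proof.
move=> Hi0.
case: (@arg_maxP _ R 'I_n i0 (fun i => i \in S) q Hi0) => i iS H.
by exists i.
Qed.

Lemma comb (R : realType) n m (q : 'I_n -> R) (c : R) : 0 < c ->
  forall S : {set 'I_n}, #|S| = m.+1 ->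
  (forall i, i \in S -> c <= q i) ->
  (forall i j, i \in S -> j \in S -> i != j -> 2 * q i < q j \/ 2 * q j < q i) ->
  exists2 i, i \in S & 2 ^+ m * c <= q i.
Proof.
move=> c0; elim: m => [|m IH] S cS Hc Hp.
  have /card_gt0P [i iS] : (0 < #|S|)%N by rewrite cS.
  by exists i => //; rewrite expr0 mul1r; apply: Hc.
have /card_gt0P [i1 i1S] : (0 < #|S|)%N by rewrite cS.
have [i0 i0S Hmax] := @exmax R n S q i1 i1S.
have cS' : #|S :\ i0| = m.+1.
  by move: cS; rewrite (cardsD1 i0) i0S => -[].
have [j jS' Hj] := IH (S :\ i0) cS'
  (fun i iS => Hc i (fintype.subsetP (subD1set S i0) i iS))
  (fun i j iS jS => Hp i j (fintype.subsetP (subD1set S i0) i iS) (fintype.subsetP (subD1set S i0) j jS)).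
move: jS'; rewrite in_setD1 => /andP [ji0 jS].
exists i0 => //.
have qj := Hmax j jS.
have cj := Hc j jS.
have p2 : 0 < 2 ^+ m * c by rewrite mulr_gt0 // exprn_gt0.
case: (Hp j i0 jS i0S ji0) => h; last by lra.
by rewrite exprS -mulrA; lra.
Qed.

Lemma count_bound (R : realType) n (S : {set 'I_n}) (q : 'I_n -> R) (k : R) :
  2 <= k ->
  (forall i, i \in S -> k^-1 <= q i /\ q i < (1 + k^-1) / 2) ->
  (forall i j, i \in S -> j \in S -> i != j -> 2 * q i < q j \/ 2 * q j < q i) ->
  #|S|%:R <= ln k / ln 2 + 1.
Proof.
move=> k2 Hq Hp.
have k0 : 0 < k by lra.
have ki0 : 0 < k^-1 by rewrite invr_gt0.
have kk : k * k^-1 = 1 by rewrite mulfV // gt_eqF.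
have ln2 : 0 < ln (2 : R) by apply: ln_gt0; lra.
have lnk : 0 <= ln k by apply: ln_ge0; lra.
case cS: #|S| => [|m].
  have : 0 <= ln k / ln 2 by rewrite divr_ge0 // ltW.
  lra.
have [i iS Hi] := @comb R n m q _ ki0 S cS (fun i iS => proj1 (Hq i iS)) Hp.
have [_ qi] := Hq i iS.
have ki1 : k^-1 < 1 by rewrite invf_lt1 //; lra.
have h1 : 2 ^+ m * k^-1 < 1 by lra.
have h2 : (2 : R) ^+ m < k.
  have : 2 ^+ m * k^-1 * k < 1 * k by rewrite ltr_pM2r.
  by rewrite -mulrA mulVf ?gt_eqF // mulr1 mul1r.
have h3 : ln ((2 : R) ^+ m) <= ln k.
  rewrite ler_ln ?posrE ?exprn_gt0 //; try lra; exact: ltW.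
rewrite lnXn in h3; last by lra.
rewrite -natr1 lerD2r ler_pdivlMr //.
by rewrite mulr_natl.
Qed.
Ltac clean := repeat match goal with
 | H : is_true (Order.le ?a _) |- _ => let _ := constr:(a : \bar _) in clear H
 | H : forall _, _ |- _ => clear H
 | H : reasonable _ _ _ _ |- _ => clear H
 | H : visible_on_side _ _ _ _ _ _ |- _ => clear H
 end.
Ltac slra := clean; lra.

Lemma leb_mono (R : realType) (A B : set R) : A `<=` B ->
  (lebesgue_measure A <= lebesgue_measure B)%E.
Proof.
move=> AB. rewrite /lebesgue_measure /lebesgue_stieltjes_measure /measure_extension.
exact: le_mu_ext.
Qed.

Lemma meas_le (R : realType) (S : set R) (a b c : R) : a <= b ->
  (forall t, S t -> a <= t <= b) -> b - a <= c -> (lebesgue_measure S <= c%:E)%E.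
Proof.
move=> ab HS bc.
apply: (@le_trans _ _ (lebesgue_measure ([set` `[a, b]] : set R))).
  apply: leb_mono => t /HS; by rewrite /= in_itv.
rewrite lebesgue_measure_itv /=.
case: ifP => _; rewrite lee_fin //.
by apply: le_trans bc; rewrite subr_ge0.
Qed.

Lemma notsq (R : realType) (u v s : R) : ~ (`|u| <= s /\ `|v| <= s) ->
  -s <= v <= s -> u < -s \/ s < u.
Proof.
move=> H hv. case: (ltrP s u) => h1; [by right|].
case: (ltrP u (-s)) => h2; [by left|].
exfalso; apply: H; split; rewrite ler_norml //.
by rewrite h1 h2.
Qed.

Lemma sq_b {R : realType} {n} {x y : 'I_n -> R} {j p} : in_square x y j p ->
  [/\ -(2^-1) <= p.1 - x j, p.1 - x j <= 2^-1, -(2^-1) <= p.2 - y j & p.2 - y j <= 2^-1].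
Proof. by case; rewrite !ler_norml => /andP[? ?] /andP[? ?]. Qed.

Lemma side_ok {R : realType} {n} {x y : 'I_n -> R} {prec i j p} :
  visible x y prec i p -> j != i -> ~~ prec j i ->
  -(2^-1) <= p.2 - y j -> p.2 - y j <= 2^-1 -> p.1 - x j < -(2^-1) \/ 2^-1 < p.1 - x j.
Proof.
move=> [_ Hv] ji nij hy1 hy2; apply: (@notsq R _ (p.2 - y j)); last by rewrite hy1 hy2.
move=> hs.
by move: (Hv j ji hs); rewrite (negbTE nij).
Qed.

Lemma nvis {R : realType} {n} {x y : 'I_n -> R} {prec i p} :
  covered x y prec i p -> exists j, [/\ j != i, in_square x y j p & ~~ prec j i].
Proof.
move=> [Hb Hv]; apply: contrapT => Hne; apply: Hv; split=> // j ji sq.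
apply: contrapT => /negP hp; apply: Hne; exists j; split => //.
Qed.

Lemma gapb {R : realType} {n} {x y : 'I_n -> R} {prec} {k : R} {i} {b r t l : R} :
  reasonable x y prec k^-1 ->
  (lebesgue_measure (visible_on_side x y prec i (bottom_side x y i)) <= b%:E)%E ->
  (lebesgue_measure (visible_on_side x y prec i (right_side x y i)) <= r%:E)%E ->
  (lebesgue_measure (visible_on_side x y prec i (top_side x y i)) <= t%:E)%E ->
  (lebesgue_measure (visible_on_side x y prec i (left_side x y i)) <= l%:E)%E ->
  k^-1 + 2 < b + r + t + l.
Proof.
move=> Hr hb hr ht hl.
have H := Hr i; rewrite /gap /visible_perimeter in H.
have H2 : ((lebesgue_measure (visible_on_side x y prec i (bottom_side x y i)) +
   lebesgue_measure (visible_on_side x y prec i (right_side x y i)) +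
   lebesgue_measure (visible_on_side x y prec i (top_side x y i)) +
   lebesgue_measure (visible_on_side x y prec i (left_side x y i))) - 2%:E <=
   (b + r + t + l - 2)%:E)%E.
  rewrite EFinB !EFinD; apply: leeB => //; repeat apply: leeD => //.
have := lt_le_trans H H2; rewrite lte_fin; slra.
Qed.


Lemma leftb (R : realType) n (x y : 'I_n -> R) prec (k : R) i : 0 < k^-1 ->
  (forall j, 2^-1 <= x j <= 1 + 2^-1) ->
  reasonable x y prec k^-1 ->
  (forall t, 0 <= t <= 1 -> covered x y prec i (left_side x y i t)) ->
  k^-1 + 2 < 1 + 2 * (x i - 2^-1) /\
  (forall i', i' != i -> ~~ prec i' i -> -1 <= y i' - y i -> y i' - y i <= 1 ->
     x i' < x i /\ k^-1 + 2 < 1 + (x i - x i') + (x i - 2^-1)).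
Proof.
move=> hk Hx Hr HL.
have [j1 [j1i sq1 p1]] := nvis (HL 0 (ltac:(by rewrite lexx ler01))).
have [a1 a2 a3 a4] := sq_b sq1.
have [j2 [j2i sq2 p2]] := nvis (HL 1 (ltac:(by rewrite lexx ler01))).
have [b1 b2 b3 b4] := sq_b sq2.
rewrite /left_side /= in a1 a2 a3 a4 b1 b2 b3 b4.
have /andP[xi1 xi2] := Hx i.
have /andP[xj1 xj1'] := Hx j1.
have /andP[xj2 xj2'] := Hx j2.
have hl : (lebesgue_measure (visible_on_side x y prec i (left_side x y i)) <= 0%:E)%E.
  apply: (@meas_le R _ 0 0 0); try slra.
  move=> t [ht hv]; have [_ nv] := HL t ht; by [].
have hr : (lebesgue_measure (visible_on_side x y prec i (right_side x y i)) <= 1%:E)%E.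
  apply: (@meas_le R _ 0 1 1); try slra.
  by move=> t [ht _].
have Htop : forall j, j != i -> ~~ prec j i -> -(2^-1) <= y i + 2^-1 - y j ->
    y i + 2^-1 - y j <= 2^-1 -> forall t, visible_on_side x y prec i (top_side x y i) t ->
    0 <= t <= 1 /\ (x i + 2^-1 - t - x j < -(2^-1) \/ 2^-1 < x i + 2^-1 - t - x j).
  move=> j ji pj h1 h2 t [ht hv]; split => //.
  by apply: (side_ok hv ji pj); rewrite /top_side /=.
have Hbot : forall j, j != i -> ~~ prec j i -> -(2^-1) <= y i - 2^-1 - y j ->
    y i - 2^-1 - y j <= 2^-1 -> forall t, visible_on_side x y prec i (bottom_side x y i) t ->
    0 <= t <= 1 /\ (x i - 2^-1 + t - x j < -(2^-1) \/ 2^-1 < x i - 2^-1 + t - x j).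
  move=> j ji pj h1 h2 t [ht hv]; split => //.
  by apply: (side_ok hv ji pj); rewrite /bottom_side /=.
have ht1 : (lebesgue_measure (visible_on_side x y prec i (top_side x y i)) <= (x i - x j1)%:E)%E.
  apply: (@meas_le R _ 0 (x i - x j1) (x i - x j1)); try slra.
  move=> t /(Htop j1 j1i p1 ltac:(slra) ltac:(slra)) [/andP[t0 t1] [h|h]];
    apply/andP; split; slra.
have hb2 : (lebesgue_measure (visible_on_side x y prec i (bottom_side x y i)) <= (x i - x j2)%:E)%E.
  apply: (@meas_le R _ (1 - (x i - x j2)) 1 (x i - x j2)); try slra.
  move=> t /(Hbot j2 j2i p2 ltac:(slra) ltac:(slra)) [/andP[t0 t1] [h|h]];
    apply/andP; split; slra.
split.
  have := gapb Hr hb2 hr ht1 hl; slra.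
move=> i' i'i pi' d1 d2.
have /andP[xi'1 xi'2] := Hx i'.
case: (lerP (y i) (y i')) => hy.
  case: (lerP (x i) (x i')) => hx.
    have ht0 : (lebesgue_measure (visible_on_side x y prec i (top_side x y i)) <= 0%:E)%E.
      apply: (@meas_le R _ 0 0 0); try slra.
      move=> t ht.
      have [/andP[t0 t1] H1] := Htop j1 j1i p1 ltac:(slra) ltac:(slra) t ht.
      have [_ H2] := Htop i' i'i pi' ltac:(slra) ltac:(slra) t ht.
      case: H1 => h1; case: H2 => h2; apply/andP; split; slra.
    have := gapb Hr hb2 hr ht0 hl; slra.
  have ht0 : (lebesgue_measure (visible_on_side x y prec i (top_side x y i)) <= (x i - x i')%:E)%E.
    apply: (@meas_le R _ 0 (x i - x i') (x i - x i')); try slra.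
    move=> t ht.
    have [/andP[t0 t1] H2] := Htop i' i'i pi' ltac:(slra) ltac:(slra) t ht.
    case: H2 => h2; apply/andP; split; slra.
  have := gapb Hr hb2 hr ht0 hl; split; slra.
case: (lerP (x i) (x i')) => hx.
  have hb0 : (lebesgue_measure (visible_on_side x y prec i (bottom_side x y i)) <= 0%:E)%E.
    apply: (@meas_le R _ 0 0 0); try slra.
    move=> t ht.
    have [/andP[t0 t1] H1] := Hbot j2 j2i p2 ltac:(slra) ltac:(slra) t ht.
    have [_ H2] := Hbot i' i'i pi' ltac:(slra) ltac:(slra) t ht.
    case: H1 => h1; case: H2 => h2; apply/andP; split; slra.
  have := gapb Hr hb0 hr ht1 hl; slra.
have hb0 : (lebesgue_measure (visible_on_side x y prec i (bottom_side x y i)) <= (x i - x i')%:E)%E.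
  apply: (@meas_le R _ (1 - (x i - x i')) 1 (x i - x i')); try slra.
  move=> t ht.
  have [/andP[t0 t1] H2] := Hbot i' i'i pi' ltac:(slra) ltac:(slra) t ht.
  case: H2 => h2; apply/andP; split; slra.
have := gapb Hr hb0 hr ht1 hl; split; slra.
Qed.

Lemma rightb (R : realType) n (x y : 'I_n -> R) prec (k : R) i : 0 < k^-1 ->
  (forall j, 2^-1 <= x j <= 1 + 2^-1) ->
  reasonable x y prec k^-1 ->
  (forall t, 0 <= t <= 1 -> covered x y prec i (right_side x y i t)) ->
  k^-1 + 2 < 1 + 2 * (1 + 2^-1 - x i) /\
  (forall i', i' != i -> ~~ prec i' i -> -1 <= y i' - y i -> y i' - y i <= 1 ->
     x i < x i' /\ k^-1 + 2 < 1 + (x i' - x i) + (1 + 2^-1 - x i)).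
Proof.
move=> hk Hx Hr HL.
have [j2 [j2i sq2 p2]] := nvis (HL 0 (ltac:(by rewrite lexx ler01))).
have [b1 b2 b3 b4] := sq_b sq2.
have [j1 [j1i sq1 p1]] := nvis (HL 1 (ltac:(by rewrite lexx ler01))).
have [a1 a2 a3 a4] := sq_b sq1.
rewrite /right_side /= in a1 a2 a3 a4 b1 b2 b3 b4.
have /andP[xi1 xi2] := Hx i.
have /andP[xj1 xj1'] := Hx j1.
have /andP[xj2 xj2'] := Hx j2.
have hr : (lebesgue_measure (visible_on_side x y prec i (right_side x y i)) <= 0%:E)%E.
  apply: (@meas_le R _ 0 0 0); try slra.
  move=> t [ht hv]; have [_ nv] := HL t ht; by [].
have hl : (lebesgue_measure (visible_on_side x y prec i (left_side x y i)) <= 1%:E)%E.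
  apply: (@meas_le R _ 0 1 1); try slra.
  by move=> t [ht _].
have Htop : forall j, j != i -> ~~ prec j i -> -(2^-1) <= y i + 2^-1 - y j ->
    y i + 2^-1 - y j <= 2^-1 -> forall t, visible_on_side x y prec i (top_side x y i) t ->
    0 <= t <= 1 /\ (x i + 2^-1 - t - x j < -(2^-1) \/ 2^-1 < x i + 2^-1 - t - x j).
  move=> j ji pj h1 h2 t [ht hv]; split => //.
  by apply: (side_ok hv ji pj); rewrite /top_side /=.
have Hbot : forall j, j != i -> ~~ prec j i -> -(2^-1) <= y i - 2^-1 - y j ->
    y i - 2^-1 - y j <= 2^-1 -> forall t, visible_on_side x y prec i (bottom_side x y i) t ->
    0 <= t <= 1 /\ (x i - 2^-1 + t - x j < -(2^-1) \/ 2^-1 < x i - 2^-1 + t - x j).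
  move=> j ji pj h1 h2 t [ht hv]; split => //.
  by apply: (side_ok hv ji pj); rewrite /bottom_side /=.
have ht1 : (lebesgue_measure (visible_on_side x y prec i (top_side x y i)) <= (x j1 - x i)%:E)%E.
  apply: (@meas_le R _ (1 - (x j1 - x i)) 1 (x j1 - x i)); try slra.
  move=> t /(Htop j1 j1i p1 ltac:(slra) ltac:(slra)) [/andP[t0 t1] [h|h]];
    apply/andP; split; slra.
have hb2 : (lebesgue_measure (visible_on_side x y prec i (bottom_side x y i)) <= (x j2 - x i)%:E)%E.
  apply: (@meas_le R _ 0 (x j2 - x i) (x j2 - x i)); try slra.
  move=> t /(Hbot j2 j2i p2 ltac:(slra) ltac:(slra)) [/andP[t0 t1] [h|h]];
    apply/andP; split; slra.
split.
  have := gapb Hr hb2 hr ht1 hl; slra.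
move=> i' i'i pi' d1 d2.
have /andP[xi'1 xi'2] := Hx i'.
case: (lerP (y i) (y i')) => hy.
  case: (lerP (x i') (x i)) => hx.
    have ht0 : (lebesgue_measure (visible_on_side x y prec i (top_side x y i)) <= 0%:E)%E.
      apply: (@meas_le R _ 0 0 0); try slra.
      move=> t ht.
      have [/andP[t0 t1] H1] := Htop j1 j1i p1 ltac:(slra) ltac:(slra) t ht.
      have [_ H2] := Htop i' i'i pi' ltac:(slra) ltac:(slra) t ht.
      case: H1 => h1; case: H2 => h2; apply/andP; split; slra.
    have := gapb Hr hb2 hr ht0 hl; slra.
  have ht0 : (lebesgue_measure (visible_on_side x y prec i (top_side x y i)) <= (x i' - x i)%:E)%E.
    apply: (@meas_le R _ (1 - (x i' - x i)) 1 (x i' - x i)); try slra.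
    move=> t ht.
    have [/andP[t0 t1] H2] := Htop i' i'i pi' ltac:(slra) ltac:(slra) t ht.
    case: H2 => h2; apply/andP; split; slra.
  have := gapb Hr hb2 hr ht0 hl; split; slra.
case: (lerP (x i') (x i)) => hx.
  have hb0 : (lebesgue_measure (visible_on_side x y prec i (bottom_side x y i)) <= 0%:E)%E.
    apply: (@meas_le R _ 0 0 0); try slra.
    move=> t ht.
    have [/andP[t0 t1] H1] := Hbot j2 j2i p2 ltac:(slra) ltac:(slra) t ht.
    have [_ H2] := Hbot i' i'i pi' ltac:(slra) ltac:(slra) t ht.
    case: H1 => h1; case: H2 => h2; apply/andP; split; slra.
  have := gapb Hr hb0 hr ht1 hl; slra.
have hb0 : (lebesgue_measure (visible_on_side x y prec i (bottom_side x y i)) <= (x i' - x i)%:E)%E.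
  apply: (@meas_le R _ 0 (x i' - x i) (x i' - x i)); try slra.
  move=> t ht.
  have [/andP[t0 t1] H2] := Hbot i' i'i pi' ltac:(slra) ltac:(slra) t ht.
  case: H2 => h2; apply/andP; split; slra.
have := gapb Hr hb0 hr ht1 hl; split; slra.
Qed.

Theorem lemma14 (R : realType) (w h k : R) (n : nat) (x y : 'I_n -> R)
    (prec : rel 'I_n) (a : R) :
  1 < w <= 2 -> 1 < h -> 2 <= k ->
  (forall i, 2^-1 <= y i <= h - 2^-1) ->
  (forall i j : 'I_n, val j = (val i).+1 -> y j - y i = k^-1) ->
  (forall i, 2^-1 <= x i <= w - 2^-1) ->
  strict_total_order prec ->
  reasonable x y prec k^-1 ->
  (#|(finset (fun i : 'I_n => `[< standard_bad_square x y prec i /\ a <= y i <= a + 1 >]))|%:R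
     <= 2 * (ln k / ln 2 + 1) :> R).
Proof.
move=> /andP[w1 w2] h1 k2 Hy Hyk Hx [Hirr [Htr Htot]] Hr.
have k0 : 0 < k by lra.
have hk : 0 < k^-1 by rewrite invr_gt0.
have Hx' : forall j, 2^-1 <= x j <= 1 + 2^-1.
  move=> j; have /andP[u v] := Hx j; apply/andP; split; lra.
have front : forall i j, prec i j -> ~~ prec j i.
  move=> i j hij; apply/negP => hji.
  by move: (Hirr i); rewrite (Htr _ _ _ hij hji).
set SL := finset (fun i : 'I_n => `[< (forall t, 0 <= t <= 1 -> covered x y prec i (left_side x y i t))
                       /\ a <= y i <= a + 1 >]).
set SR := finset (fun i : 'I_n => `[< (forall t, 0 <= t <= 1 -> covered x y prec i (right_side x y i t))
                       /\ a <= y i <= a + 1 >]).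
have cL : #|SL|%:R <= ln k / ln 2 + 1 :> R.
  apply: (@count_bound R n SL (fun i => 1 + 2^-1 - x i + k^-1) k k2).
    move=> i; rewrite inE => /asboolP [HL /andP[ya yb]].
    have [E1 _] := @leftb R n x y prec k i hk Hx' Hr HL.
    have /andP[u v] := Hx' i; split; lra.
  move=> i j Hi Hj ij; move: Hi Hj; rewrite !inE.
  move=> [HLi Hi]; move=> [HLj Hj].
  move/andP: Hi => [yai ybi]; move/andP: Hj => [yaj ybj].
  case/orP: (Htot i j ij) => hp.
    have [_ E2] := @leftb R n x y prec k i hk Hx' Hr HLi.
    have [] := E2 j (ltac:(by rewrite eq_sym)) (front i j hp) ltac:(lra) ltac:(lra).
    by move=> _ E; left; lra.
  have [_ E2] := @leftb R n x y prec k j hk Hx' Hr HLj.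
  have [] := E2 i ij (front j i hp) ltac:(lra) ltac:(lra).
  by move=> _ E; right; lra.
have cR : #|SR|%:R <= ln k / ln 2 + 1 :> R.
  apply: (@count_bound R n SR (fun i => x i - 2^-1 + k^-1) k k2).
    move=> i; rewrite inE => /asboolP [HL /andP[ya yb]].
    have [E1 _] := @rightb R n x y prec k i hk Hx' Hr HL.
    have /andP[u v] := Hx' i; split; lra.
  move=> i j Hi Hj ij; move: Hi Hj; rewrite !inE.
  move=> [HLi Hi]; move=> [HLj Hj].
  move/andP: Hi => [yai ybi]; move/andP: Hj => [yaj ybj].
  case/orP: (Htot i j ij) => hp.
    have [_ E2] := @rightb R n x y prec k i hk Hx' Hr HLi.
    have [] := E2 j (ltac:(by rewrite eq_sym)) (front i j hp) ltac:(lra) ltac:(lra).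
    by move=> _ E; left; lra.
  have [_ E2] := @rightb R n x y prec k j hk Hx' Hr HLj.
  have [] := E2 i ij (front j i hp) ltac:(lra) ltac:(lra).
  by move=> _ E; right; lra.
set A := finset _.
have sub : A \subset SL :|: SR.
  apply/fintype.subsetP => i; rewrite !inE.
  move=> [[_ HLR] hy]; apply/orP.
  by case: HLR => H; [left|right]; apply/asboolP; split.
have hc : (#|A| <= #|SL| + #|SR|)%N.
  apply: leq_trans (subset_leq_card sub) _; rewrite cardsU; exact: leq_subr.
apply: (@le_trans _ _ (#|SL| + #|SR|)%:R); first by rewrite ler_nat.
rewrite natrD; lra.
Qed.
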